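(* There does not exist an equal norm tight integer frame with five elements in $\mathcal{H}_3$.
   Context: $\mathcal{H}_M$ is the real $M$-dimensional Hilbert space, identified with $\mathbb{R}^M$ via a fixed orthonormal basis. An equal norm tight integer frame (ENTIF) with $N$ elements in $\mathcal{H}_M$ is an $M\times N$ integer matrix $A$ of rank $M$ with $AA^T=\lambda I_M$ for some $\lambda>0$ and all columns of the same Euclidean norm. *)

(* Defs.v *)
From mathcomp Require Import all_boot all_order all_algebra.
Set Implicit Arguments. Unset Strict Implicit. Unset Printing Implicit Defensive.
Import Order.TTheory GRing.Theory Num.Theory.
Local Open Scope ring_scope.

(* Since A A^T has integer entries, lambda is necessarily a
   positive integer; we take lambda : int. *)
Definition ENTIF (M N : nat) (A : 'M[int]_(M, N)) : Prop :=
  \rank (map_mx (fun z : int => z%:~R : rat) A) = M /\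
  (exists lambda : int, 0 < lambda /\ A *m A^T = lambda%:M) /\
  (forall j k : 'I_N, \sum_(i < M) A i j ^+ 2 = \sum_(i < M) A i k ^+ 2).

(* Main.v *)
Require Import Defs.
From mathcomp Require Import all_boot all_order all_algebra.
From mathcomp Require Import zify ring lra.
Import Order.TTheory GRing.Theory Num.Theory.
Local Open Scope ring_scope.

Definition rr (x : int) : int := (x %% 2)%Z.
Definition qq (x : int) : int := (x %/ 2)%Z.
Definition kk (x : int) : int := qq x ^+ 2 + qq x * rr x.
Definition pp (x y : int) : int := 2 * qq x * qq y + qq x * rr y + qq y * rr x.

Lemma rr01 x : rr x = 0 \/ rr x = 1.
Proof.
rewrite /rr. have := modz_ge0 x (isT : (2:int) != 0).
have := ltz_mod x (isT : (2:int) != 0). lia.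
Qed.

Lemma xqr x : x = 2 * qq x + rr x.
Proof. by rewrite {1}(divz_eq x 2) mulrC. Qed.

Lemma sq4 x : x ^+ 2 = rr x + 4 * kk x.
Proof.
rewrite {1}(xqr x) /kk. case: (rr01 x) => ->; ring.
Qed.

Lemma prod2 x y : x * y = 2 * pp x y + rr x * rr y.
Proof. rewrite {1}(xqr x) {1}(xqr y) /pp; ring. Qed.

Definition good (A : 'M[int]_(3,5)) (lam : int) :=
  0 < lam /\ (forall i k, \sum_j A i j * A k j = lam *+ (i == k)) /\
  (forall j k : 'I_5, \sum_i A i j ^+ 2 = \sum_i A i k ^+ 2).

Lemma parity (A : 'M[int]_(3,5)) lam : good A lam ->
  (forall i j, rr (A i j) = 0) \/ (forall i j, rr (A i j) = 1).
Proof.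
move=> [lam0 [horth hcol]].
set c := \sum_i A i ord0 ^+ 2.
have hc : forall j, \sum_i A i j ^+ 2 = c by move=> j; exact: hcol.
have hrow : forall i, \sum_j A i j ^+ 2 = lam.
  by move=> i; have := horth i i; rewrite eqxx mulr1n => <-; apply: eq_bigr => j _; rewrite expr2.
have h35 : lam *+ 3 = c *+ 5.
  have e1 : \sum_i \sum_j A i j ^+ 2 = lam *+ 3.
    by rewrite (eq_bigr (fun _ => lam)) ?sumr_const ?card_ord // => i _; exact: hrow.
  have e2 : \sum_j \sum_i A i j ^+ 2 = c *+ 5.
    by rewrite (eq_bigr (fun _ => c)) ?sumr_const ?card_ord // => j _; exact: hc.
  by rewrite -e1 -e2 exchange_big.
pose n i := \sum_j rr (A i j).
pose m j := \sum_i rr (A i j).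
have hn : forall i, exists K, lam = n i + 4 * K.
  move=> i; exists (\sum_j kk (A i j)); rewrite -(hrow i) mulr_sumr -big_split.
  by apply: eq_bigr => j _; rewrite sq4.
have hm : forall j, exists L, c = m j + 4 * L.
  move=> j; exists (\sum_i kk (A i j)); rewrite -(hc j) mulr_sumr -big_split.
  by apply: eq_bigr => i _; rewrite sq4.
have rge : forall i j, 0 <= rr (A i j) <= 1 by move=> i j; case: (rr01 (A i j)) => ->.
have hnb : forall i, 0 <= n i <= 5.
  move=> i; rewrite /n !big_ord_recl big_ord0.
  have := rge i ord0; have := rge i (lift ord0 ord0);
  have := rge i (lift ord0 (lift ord0 ord0));
  have := rge i (lift ord0 (lift ord0 (lift ord0 ord0)));
  have := rge i (lift ord0 (lift ord0 (lift ord0 (lift ord0 ord0)))). lia.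
have hmb : forall j, 0 <= m j <= 3.
  move=> j; rewrite /m !big_ord_recl big_ord0.
  have := rge ord0 j; have := rge (lift ord0 ord0) j;
  have := rge (lift ord0 (lift ord0 ord0)) j. lia.
have hmeq : forall j, m j = m ord0.
  move=> j; have [L1 e1] := hm j; have [L2 e2] := hm ord0.
  have := hmb j; have := hmb ord0; lia.
have hsum : \sum_i n i = (m ord0) *+ 5.
  rewrite /n exchange_big /= (eq_bigr (fun _ => m ord0)) ?sumr_const ?card_ord //.
  by move=> j _; rewrite -(hmeq j).
have hmu : m ord0 = 0 \/ m ord0 = 3.
  move: hsum; rewrite !big_ord_recl big_ord0.
  have [K1 e1] := hn ord0; have [K2 e2] := hn (lift ord0 ord0).
  have [K3 e3] := hn (lift ord0 (lift ord0 ord0)).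
  have [L e4] := hm ord0.
  have := hnb ord0; have := hnb (lift ord0 ord0);
  have := hnb (lift ord0 (lift ord0 ord0)); have := hmb ord0.
  move: h35. rewrite !mulrS !mulr0n. lia.
case: hmu => hmu; [left | right] => i j.
- have h0 : m j = 0 by rewrite hmeq.
  have := psumr_eq0P (P := xpredT) (fun i _ => (andP (rge i j)).1) h0.
  by apply.
- have h3 : \sum_i (1 - rr (A i j)) = 0.
    rewrite sumrB sumr_const card_ord -/(m j) hmeq hmu. by [].
  have hnn : forall i, xpredT i -> 0 <= 1 - rr (A i j).
    by move=> i' _; have := rge i' j; lia.
  have := psumr_eq0P hnn h3 (i := i) isT. lia.
Qed.

Lemma descent n : forall (A : 'M[int]_(3,5)) lam, (`|lam| <= n)%N -> good A lam -> False.
Proof.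
elim: n => [|n IH] A lam hle hg.
  by case: hg => h0 _; lia.
have hp := @parity A lam hg.
case: hg => [lam0 [horth hcol]].
case: hp => hp.
- pose B := \matrix_(i, j) qq (A i j).
  have hAB : forall i j, A i j = 2 * B i j.
    by move=> i j; rewrite mxE {1}(xqr (A i j)) hp addr0.
  have hS : forall i k, \sum_j A i j * A k j = 4 * \sum_j B i j * B k j.
    move=> i k; rewrite mulr_sumr; apply: eq_bigr => j _; rewrite !hAB; ring.
  have hC : forall j, \sum_i A i j ^+ 2 = 4 * \sum_i B i j ^+ 2.
    move=> j; rewrite mulr_sumr; apply: eq_bigr => i _; rewrite !hAB; ring.
  set lam' := \sum_j B ord0 j * B ord0 j.
  have hl : lam = 4 * lam'.
    by have := horth ord0 ord0; rewrite eqxx mulr1n hS => <-.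
  apply: (IH B lam'); first by lia.
  split; first by lia.
  split.
  + move=> i k; have := horth i k; rewrite hS hl.
    case: (i == k); rewrite ?mulr1n ?mulr0n; lia.
  + move=> j k; have := hcol j k; rewrite !hC; lia.
- have := horth ord0 (lift ord0 ord0); rewrite /= mulr0n.
  rewrite (eq_bigr (fun j => 2 * pp (A ord0 j) (A (lift ord0 ord0) j) + 1)); last first.
    by move=> j _; rewrite prod2 !hp mulr1.
  rewrite big_split /= sumr_const card_ord -mulr_sumr. lia.
Qed.

Theorem corollary4p13 : ~ exists A : 'M[int]_(3, 5), ENTIF A.
Proof.
case=> A [_ [[lam [hl hM]] hcol]].
apply: (@descent `|lam|%N A lam (leqnn _)).
split; first by [].
split; last by [].
move=> i k; have := congr1 (fun M : 'M[int]_3 => M i k) hM; rewrite !mxE => <-.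
by apply: eq_bigr => j _; rewrite mxE.
Qed.
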